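(* Let $\mathcal{X}$ be a discrete set, $\mathcal{P}$ a distribution over $\mathcal{X}$, and $\mathcal{A}$ an $(\varepsilon,0)$-differentially private randomized algorithm that on input a dataset in $\mathcal{X}^n$ outputs a function from $\mathcal{X}$ to $[0,1]$. Let $\mathbf{S},\mathbf{T}$ be independent random variables each distributed according to $\mathcal{P}^n$, and let $\boldsymbol{\phi}=\mathcal{A}(\mathbf{S})$. Then for every positive integer $k$ and every function $\psi:\mathcal{X}\to[0,1]$ in the support of $\mathcal{A}(\mathbf{S})$, $$\mathbb{E}\left[\mathcal{E}_{\mathbf{S}}[\boldsymbol{\phi}]^k \,\middle|\, \boldsymbol{\phi}=\psi\right]\le e^{k\varepsilon}\cdot\mathbb{E}\left[\mathcal{E}_{\mathbf{T}}[\psi]^k\right].$$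
   Context: For a dataset $S=(x_1,\dots,x_n)$ and $\psi:\mathcal{X}\to[0,1]$, $\mathcal{E}_S[\psi]=\frac1n\sum_{i=1}^n\psi(x_i)$. Two datasets in $\mathcal{X}^n$ are adjacent if they differ in a single element. A randomized algorithm $\mathcal{A}$ with domain $\mathcal{X}^n$ is $(\varepsilon,\delta)$-differentially private if for every set $\mathcal{S}$ of outputs and every pair of adjacent datasets $x,y$, $\Pr[\mathcal{A}(x)\in\mathcal{S}]\le e^{\varepsilon}\Pr[\mathcal{A}(y)\in\mathcal{S}]+\delta$ (probability over the coins of $\mathcal{A}$). *)

(* Defs.v *)
From HB Require Import structures.
From mathcomp Require Import all_boot all_order all_algebra.
From mathcomp Require Import all_classical all_reals.
From mathcomp Require Import ereal sequences esum exp.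
Set Implicit Arguments. Unset Strict Implicit. Unset Printing Implicit Defensive.
Import Order.TTheory GRing.Theory Num.Theory.
Local Open Scope classical_set_scope.
Local Open Scope ring_scope.

Section DPDefs.
Variables (R : realType) (X : choiceType) (n : nat).

Definition is_distr (T : choiceType) (p : T -> R) : Prop :=
  (forall t, 0 <= p t) /\ (\esum_(t in [set: T]) (p t)%:E = 1)%E.

Definition prob (T : choiceType) (p : T -> R) (E : set T) : \bar R :=
  (\esum_(t in E) (p t)%:E)%E.

Definition prodP (P : X -> R) (s : n.-tuple X) : R :=
  \prod_(i < n) P (tnth s i).

Definition empavg (s : n.-tuple X) (psi : X -> R) : R :=
  (\sum_(i < n) psi (tnth s i)) / n%:R.

(* A randomized algorithm from X^n to functions X -> [0,1]: for each dataset
   s, A s is the (discrete) output distribution, with A s f = Pr[A(s) = f]. *)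
Definition rand_alg (A : n.-tuple X -> (X -> R) -> R) : Prop :=
  (forall s, is_distr (A s)) /\
  (forall s f, A s f != 0 -> forall a, 0 <= f a <= 1).

Definition adjacent (x y : n.-tuple X) : Prop :=
  exists i : 'I_n, forall j : 'I_n, j != i -> tnth x j = tnth y j.

Definition differentially_private (eps delta : R)
    (A : n.-tuple X -> (X -> R) -> R) : Prop :=
  forall (O : set (X -> R)) (x y : n.-tuple X), adjacent x y ->
    (prob (A x) O <= (expR eps)%:E * prob (A y) O + delta%:E)%E.

(* S ~ P^n and phi = A(S) (algorithm coins independent of S):
   Pr[phi = psi] = sum_s P^n(s) A(s)(psi). *)
Definition pr_out (P : X -> R) (A : n.-tuple X -> (X -> R) -> R)
    (psi : X -> R) : \bar R :=
  (\esum_(s in [set: n.-tuple X]) (prodP P s * A s psi)%:E)%E.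

(* E[ E_S[phi]^k * 1{phi = psi} ] *)
Definition exp_on_out (P : X -> R) (A : n.-tuple X -> (X -> R) -> R)
    (k : nat) (psi : X -> R) : \bar R :=
  (\esum_(s in [set: n.-tuple X])
     (prodP P s * A s psi * empavg s psi ^+ k)%:E)%E.

(* Conditional expectation E[ E_S[phi]^k | phi = psi ] (elementary
   conditioning on an event of positive probability). *)
Definition cond_moment (P : X -> R) (A : n.-tuple X -> (X -> R) -> R)
    (k : nat) (psi : X -> R) : R :=
  fine (exp_on_out P A k psi) / fine (pr_out P A psi).

Definition moment (P : X -> R) (k : nat) (psi : X -> R) : R :=
  fine (\esum_(t in [set: n.-tuple X]) (prodP P t * empavg t psi ^+ k)%:E)%E.

End DPDefs.

(* Main.v *)
Require Import Defs.
From HB Require Import structures.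
From mathcomp Require Import all_boot all_order all_algebra.
From mathcomp Require Import all_classical all_reals.
From mathcomp Require Import ereal sequences esum exp.
From mathcomp Require Import ring lra.
Import Order.TTheory GRing.Theory Num.Theory.
Local Open Scope classical_set_scope.
Local Open Scope ring_scope.
Set Implicit Arguments. Unset Strict Implicit.
Lemma esumZ (R : realType) (T : choiceType) (S : set T) (c : R) (a : T -> \bar R) :
  0 <= c -> (forall x, S x -> (0 <= a x)%E) ->
  (\esum_(i in S) (c%:E * a i) = c%:E * \esum_(i in S) a i)%E.
Proof.
move=> c0 a0; rewrite /esum -ereal_supZl //; last first.
  by apply/set0P; exists 0%E; exists set0; [exact: fsets_set0|rewrite fsbig_set0].
congr ereal_sup; rewrite image_comp; apply: eq_imagel => X [finX XS] /=.
rewrite !fsbig_finite // big_seq [in RHS]big_seq ge0_sume_distrr // => i.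
by rewrite in_fset_set // inE => /XS /a0.
Qed.
Lemma esum_pt (R : realType) (T : choiceType) (a : T -> \bar R) x :
  (forall y, (0 <= a y)%E) -> (a x <= \esum_(i in [set: T]) a i)%E.
Proof.
move=> a0; apply: esum_ge; exists [set x]; last by rewrite fsbig_set1.
by split => //; exact: finite_set1.
Qed.

Lemma prodP_cons (R : realType) (X : choiceType) (n : nat) (P : X -> R) x (t : n.-tuple X) :
  prodP P [tuple of x :: t] = P x * prodP P t.
Proof. by rewrite /prodP big_ord_recl; congr (_ * _); apply: eq_bigr => i _; rewrite tnthS. Qed.

Lemma sum_prodP (R : realType) (X : choiceType) (P : X -> R) :
  is_distr P -> forall n, (\esum_(t in [set: n.-tuple X]) (prodP P t)%:E = 1)%E.
Proof.
move=> [P0 P1]; elim=> [|n IH].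
  rewrite (_ : [set: 0.-tuple X] = [set [tuple]]); last first.
    by apply/seteqP; split => t //= _; rewrite tuple0.
  by rewrite esum_set1 /prodP ?big_ord0 // lee_fin big_ord0.
have -> : [set: n.+1.-tuple X] = (fun z : X * n.-tuple X => [tuple of z.1 :: z.2]) @` ([set: X] `*`` (fun _ => [set: n.-tuple X])).
  apply/seteqP; split => t // _; exists (thead t, behead_tuple t) => //.
  by rewrite [RHS]tuple_eta.
rewrite esum_image; last first.
  by move=> [x1 t1] [x2 t2] _ _ /= [-> /val_inj ->].
rewrite -(@esum_esum _ _ _ [set: X] (fun _ => [set: n.-tuple X]) (fun x t => (prodP P [tuple of x :: t])%:E)); last first.
  by move=> x t _ _; rewrite lee_fin /prodP; apply: prodr_ge0 => i _.
transitivity (\esum_(x in [set: X]) (P x)%:E)%E; last by [].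
apply: eq_esum => x _.
under eq_esum do rewrite prodP_cons EFinM.
by rewrite esumZ // ?IH ?mule1 // => t _; rewrite lee_fin /prodP; apply: prodr_ge0.
Qed.
Definition hyb {X : choiceType} {n : nat} (J : {set 'I_n}) (s t : n.-tuple X) : n.-tuple X :=
  [tuple if i \in J then tnth t i else tnth s i | i < n].

Lemma tnth_hyb {X : choiceType} {n : nat} (J : {set 'I_n}) (s t : n.-tuple X) i :
  tnth (hyb J s t) i = if i \in J then tnth t i else tnth s i.
Proof. by rewrite /hyb tnth_mktuple. Qed.

Section Main.
Variables (R : realType) (X : choiceType) (n : nat)
    (P : X -> R) (A : n.-tuple X -> (X -> R) -> R) (eps : R) (psi : X -> R).
Hypothesis (hP : is_distr P) (hA : rand_alg A) (hdp : differentially_private eps 0 A).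

Lemma A_ge0 s : 0 <= A s psi.
Proof. by case: hA => /(_ s) [] . Qed.

Lemma dp_pt x y : Defs.adjacent x y -> A x psi <= expR eps * A y psi.
Proof.
move=> adj; have := @hdp [set psi] x y adj.
by rewrite /prob !esum_set1 ?lee_fin ?A_ge0 // addr0.
Qed.


Lemma group_dp m (J : {set 'I_n}) x y : #|J| = m ->
  (forall i, i \notin J -> tnth x i = tnth y i) ->
  A x psi <= expR (m%:R * eps) * A y psi.
Proof.
elim: m J x y => [|m IH] J x y cJ exy.
  have J0 : J = finset.set0 by apply/eqP; rewrite -cards_eq0 cJ.
  have -> : x = y by apply: eq_from_tnth => i; apply: exy; rewrite J0 inE.
  by rewrite mul0r expR0 mul1r.
have : (0 < #|J|)%N by rewrite cJ.
rewrite card_gt0 => /finset.set0Pn [j jJ].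
set z := hyb [set j] x y.
have adj : Defs.adjacent x z.
  by exists j => i ij; rewrite tnth_hyb inE (negPf ij).
have zy : forall i, i \notin J :\ j -> tnth z i = tnth y i.
  move=> i; rewrite tnth_hyb !inE negb_and negbK; case: eqP => [-> //|_] /= iJ.
  exact: exy.
have := IH (J :\ j) z y; rewrite (cardsD1 j J) jJ in cJ.
move=> /(_ ltac:(by case: cJ) zy) h.
apply: (le_trans (dp_pt adj)).
have -> : m.+1%:R * eps = eps + m%:R * eps by rewrite -addn1 natrD mulrDl mul1r addrC.
by rewrite expRD -mulrA ler_wpM2l ?expR_ge0.
Qed.

Local Notation T := (n.-tuple X).

Lemma prodP_ge0 (s : T) : 0 <= prodP P s.
Proof. by rewrite /prodP; apply: prodr_ge0 => i _; case: hP. Qed.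

Lemma hybK J (s t : T) : hyb J (hyb J s t) (hyb J t s) = s.
Proof. by apply: eq_from_tnth => i; rewrite !tnth_hyb; case: (i \in J). Qed.

Lemma prodP_hyb J (s t : T) :
  prodP P (hyb J s t) * prodP P (hyb J t s) = prodP P s * prodP P t.
Proof.
rewrite /prodP -!big_split /=; apply: eq_bigr => i _.
by rewrite !tnth_hyb; case: (i \in J) => //; rewrite mulrC.
Qed.

Lemma swap_ineq (J : {set 'I_n}) (G : T -> R) :
  (forall s, 0 <= G s <= 1) ->
  (forall s t, (forall i, i \in J -> tnth s i = tnth t i) -> G s = G t) ->
  (\esum_(s in [set: T]) (prodP P s * A s psi * G s)%:E <=
   (expR (#|J|%:R * eps))%:E * pr_out P A psi *
     \esum_(t in [set: T]) (prodP P t * G t)%:E)%E.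
Proof.
move=> G01 GJ.
have G0 s : 0 <= G s by case/andP: (G01 s).
set c := expR (#|J|%:R * eps).
set D := [set: T] `*`` (fun _ => [set: T]).
pose sig (z : T * T) := (hyb J z.1 z.2, hyb J z.2 z.1).
have sigK z : sig (sig z) = z by case: z => s t; rewrite /sig /= !hybK.
set M := (\esum_(t in [set: T]) (prodP P t * G t)%:E)%E.
have M0 : (0 <= M)%E.
  by apply: esum_ge0 => t _; rewrite lee_fin mulr_ge0 ?prodP_ge0.
have M1 : (M <= 1)%E.
  rewrite -(sum_prodP hP n); apply: le_esum => t _; rewrite lee_fin.
  by rewrite ler_piMr ?prodP_ge0 //; case/andP: (G01 t).
have Mfin : M = (fine M)%:E.
  by rewrite fineK // ge0_fin_numE // (le_lt_trans M1) // ltey.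
have -> : (\esum_(s in [set: T]) (prodP P s * A s psi * G s)%:E =
   \esum_(s in [set: T]) \esum_(t in [set: T])
    (prodP P s * A s psi * G s * prodP P t)%:E)%E.
  apply: eq_esum => s _; under eq_esum do rewrite EFinM.
  rewrite esumZ ?sum_prodP ?mule1 // ?mulr_ge0 ?prodP_ge0 ?A_ge0 //.
  by move=> t _; rewrite lee_fin prodP_ge0.
rewrite esum_esum; last by move=> s t _ _; rewrite lee_fin !mulr_ge0 ?prodP_ge0 ?A_ge0.
rewrite (reindex_esum D D sig); last first.
  split.
  - by move=> z _.
  - by move=> z1 z2 _ _ e; rewrite -(sigK z1) e sigK.
  - by move=> z _; exists (sig z) => //; rewrite sigK.
apply: (@le_trans _ _ (\esum_(z in D) ((c * (prodP P z.1 * A z.1 psi)) *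
     (prodP P z.2 * G z.2))%:E)%E).
  apply: le_esum => -[s t] _; rewrite lee_fin /sig /=.
  have GG : G (hyb J s t) = G t by apply: GJ => i iJ; rewrite tnth_hyb iJ.
  have aa : A (hyb J s t) psi <= c * A s psi.
    apply: (group_dp (J := J)) => // i iJ; rewrite tnth_hyb (negPf iJ) //.
  rewrite GG.
  have -> : prodP P (hyb J s t) * A (hyb J s t) psi * G t * prodP P (hyb J t s)
     = (prodP P (hyb J s t) * prodP P (hyb J t s)) * G t * A (hyb J s t) psi by ring.
  rewrite prodP_hyb.
  have -> : c * (prodP P s * A s psi) * (prodP P t * G t) =
    (prodP P s * prodP P t) * G t * (c * A s psi) by ring.
  by rewrite ler_wpM2l // !mulr_ge0 ?prodP_ge0.
rewrite -(@esum_esum R _ _ [set: T] (fun _ => [set: T])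
   (fun s t => ((c * (prodP P s * A s psi)) * (prodP P t * G t))%:E)); last first.
  by move=> s t _ _; rewrite lee_fin !mulr_ge0 ?prodP_ge0 ?A_ge0 ?expR_ge0.
have -> : (\esum_(i in [set: T]) \esum_(j in [set: T])
    ((c * (prodP P i * A i psi)) * (prodP P j * G j))%:E =
    \esum_(i in [set: T]) (c * (prodP P i * A i psi))%:E * M)%E.
  apply: eq_esum => i _; under eq_esum do rewrite EFinM.
  rewrite esumZ // ?mulr_ge0 ?expR_ge0 ?prodP_ge0 ?A_ge0 //.
  by move=> t _; rewrite lee_fin mulr_ge0 ?prodP_ge0.
rewrite Mfin; under eq_esum do rewrite -EFinM mulrC EFinM.
rewrite esumZ ?fine_ge0 //; last first.
  by move=> s _; rewrite lee_fin !mulr_ge0 ?prodP_ge0 ?A_ge0 ?expR_ge0.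
under eq_esum do rewrite EFinM.
rewrite esumZ ?expR_ge0 //; last by move=> s _; rewrite lee_fin mulr_ge0 ?prodP_ge0 ?A_ge0.
by rewrite /pr_out muleC.
Qed.

Lemma expR_mono (x y : R) : x <= y -> expR x <= expR y.
Proof.
move=> xy; have -> : y = x + (y - x) by rewrite addrC subrK.
rewrite expRD ler_peMr ?expR_ge0 //.
by apply: le_trans (expR_ge1Dx _); rewrite lerDl subr_ge0.
Qed.

Lemma eps_ge0 (i0 : 'I_n) : 0 <= eps.
Proof.
case: (pselect (exists x : X, True)) => [[x0 _]|nX]; last first.
  exfalso; have eX : [set: X] = set0.
    by apply/seteqP; split => x // _; apply: nX; exists x.
  case: hP => _; rewrite eX esum_set0 => /(congr1 fine) /= /eqP.
  by rewrite eq_sym oner_eq0.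
pose s := [tuple x0 | i < n].
have := @hdp [set: X -> R] s s (ex_intro _ i0 (fun _ _ => erefl)).
case: hA => /(_ s) [_]; rewrite /prob => -> _.
rewrite adde0 mule1 lee_fin => h.
by rewrite leNgt -expR_lt1 -leNgt.
Qed.

Definition Gf k (f : {ffun 'I_k -> 'I_n}) (s : T) := \prod_(j < k) psi (tnth s (f j)).

Hypothesis (hpsi : forall a, 0 <= psi a <= 1).

Lemma psi0 a : 0 <= psi a. Proof. by case/andP: (hpsi a). Qed.

Lemma Gf_ge0 k (f : {ffun 'I_k -> 'I_n}) s : 0 <= Gf f s.
Proof. by apply: prodr_ge0 => j _; apply: psi0. Qed.

Lemma empavg_expand k (s : T) :
  empavg s psi ^+ k = (n%:R^-1) ^+ k * \sum_(f : {ffun 'I_k -> 'I_n}) Gf f s.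
Proof.
rewrite /empavg mulrC exprMn; congr (_ * _).
rewrite -[in LHS](card_ord k) -prodr_const /Gf.
by rewrite bigA_distr_bigA.
Qed.

Lemma per_f k (k0 : (0 < k)%N) (f : {ffun 'I_k -> 'I_n}) :
  (\esum_(s in [set: T]) (prodP P s * A s psi * Gf f s)%:E <=
   (expR (k%:R * eps))%:E * pr_out P A psi *
     \esum_(t in [set: T]) (prodP P t * Gf f t)%:E)%E.
Proof.
set J := [set f j | j : 'I_k]%SET.
apply: le_trans (swap_ineq (J := J) _ _) _.
- move=> s; rewrite Gf_ge0 /Gf prodr_ile1 // => j _; exact: hpsi.
- move=> s t e; rewrite /Gf; apply: eq_bigr => j _; rewrite e //.
  by apply/imsetP; exists j.
rewrite lee_wpmul2r ?lee_wpmul2r ?lee_fin //.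
- by rewrite esum_ge0 // => s _; rewrite lee_fin mulr_ge0 ?prodP_ge0 ?Gf_ge0.
- by rewrite /pr_out esum_ge0 // => s _; rewrite lee_fin mulr_ge0 ?prodP_ge0 ?A_ge0.
- apply: expR_mono; rewrite ler_wpM2r ?(eps_ge0 (f (Ordinal k0))) // ler_nat.
  by apply: leq_trans (leq_imset_card _ _) _; rewrite card_ord.
Qed.

Lemma esum_expand k (w : T -> R) : (forall s, 0 <= w s) ->
  (\esum_(s in [set: T]) (w s * empavg s psi ^+ k)%:E =
   \sum_(f : {ffun 'I_k -> 'I_n}) ((n%:R^-1 ^+ k)%:E *
      \esum_(s in [set: T]) (w s * Gf f s)%:E))%E.
Proof.
move=> w0; have cn0 : 0 <= n%:R^-1 ^+ k :> R by rewrite exprn_ge0 // invr_ge0.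
under eq_esum do rewrite empavg_expand mulr_sumr mulr_sumr -sumEFin.
rewrite esum_sum; last by move=> s f _ _; rewrite lee_fin !mulr_ge0 ?Gf_ge0.
apply: eq_bigr => f _; rewrite -esumZ //; last by move=> s _; rewrite lee_fin mulr_ge0 ?Gf_ge0.
by apply: eq_esum => s _; rewrite -EFinM; congr (_%:E); ring.
Qed.

Lemma main_ineq k (k0 : (0 < k)%N) :
  (exp_on_out P A k psi <= (expR (k%:R * eps))%:E * pr_out P A psi *
     \esum_(t in [set: T]) (prodP P t * empavg t psi ^+ k)%:E)%E.
Proof.
have cn0 : 0 <= n%:R^-1 ^+ k :> R by rewrite exprn_ge0 // invr_ge0.
rewrite /exp_on_out esum_expand; last by move=> s; rewrite mulr_ge0 ?prodP_ge0 ?A_ge0.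
rewrite esum_expand; last by move=> s; rewrite prodP_ge0.
rewrite ge0_sume_distrr; last first.
  by move=> f _; rewrite mule_ge0 ?lee_fin // esum_ge0 // => s _; rewrite lee_fin mulr_ge0 ?prodP_ge0 ?Gf_ge0.
apply: lee_sum => f _; rewrite muleCA lee_wpmul2l ?lee_fin //.
exact: per_f.
Qed.
End Main.
Lemma empavg01 (R : realType) (X : choiceType) (n : nat) (psi : X -> R) (t : n.-tuple X) :
  (forall a, 0 <= psi a <= 1) -> 0 <= empavg t psi <= 1.
Proof.
move=> hpsi; have p0 a : 0 <= psi a by case/andP: (hpsi a).
rewrite /empavg; apply/andP; split.
  by rewrite divr_ge0 ?sumr_ge0.
case: n t => [|m] t; first by rewrite invr0 mulr0.
rewrite ler_pdivrMr ?ltr0n // mul1r.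
apply: le_trans (ler_sum _ (fun i _ => (proj2 (andP (hpsi (tnth t i)))))) _.
by rewrite sumr_const card_ord.
Qed.

Unset Implicit Arguments.

Theorem lemma3p1 (R : realType) (X : choiceType) (n : nat)
    (P : X -> R) (A : n.-tuple X -> (X -> R) -> R) (eps : R) :
  is_distr P ->
  rand_alg A ->
  differentially_private eps 0 A ->
  forall (k : nat), (0 < k)%N ->
  forall psi : X -> R, (forall a, 0 <= psi a <= 1) ->
  (0 < pr_out P A psi)%E ->
  cond_moment P A k psi <= expR (k%:R * eps) * moment n P k psi.
Proof.
move=> hP hA hdp k k0 psi hpsi Q0.
have H := main_ineq hP hA hdp hpsi k0.
set E := exp_on_out P A k psi in H *.
set Q := pr_out P A psi in H Q0 *.
set M := (\esum_(t in [set: n.-tuple X]) (prodP P t * empavg t psi ^+ k)%:E)%E in H *.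
have a1 s : A s psi <= 1.
  have [/(_ s) [_ h1] _] := hA; rewrite -lee_fin -h1.
  by apply: (@esum_pt _ _ (fun f => (A s f)%:E) psi) => f; rewrite lee_fin (A_ge0 _ hA).
have Q1 : (Q <= 1)%E.
  rewrite -(sum_prodP hP n); apply: le_esum => s _; rewrite lee_fin.
  by rewrite ler_piMr ?(prodP_ge0 hP) ?a1.
have M0 : (0 <= M)%E.
  apply: esum_ge0 => t _; rewrite lee_fin mulr_ge0 ?(prodP_ge0 hP) ?exprn_ge0 //.
  by case/andP: (empavg01 t hpsi).
have M1 : (M <= 1)%E.
  rewrite -(sum_prodP hP n); apply: le_esum => t _; rewrite lee_fin.
  have /andP[e0 e1] := empavg01 t hpsi.
  by rewrite ler_piMr ?(prodP_ge0 hP) ?exprn_ile1.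
have E0 : (0 <= E)%E.
  apply: esum_ge0 => t _; rewrite lee_fin !mulr_ge0 ?(prodP_ge0 hP) ?(A_ge0 _ hA) ?exprn_ge0 //.
  by case/andP: (empavg01 t hpsi).
have Qfin : Q = (fine Q)%:E by rewrite fineK // ge0_fin_numE ?(ltW Q0) // (le_lt_trans Q1) // ltey.
have Mfin : M = (fine M)%:E by rewrite fineK // ge0_fin_numE // (le_lt_trans M1) // ltey.
rewrite Qfin Mfin -!EFinM in H.
have Efin : E = (fine E)%:E.
  by rewrite fineK // ge0_fin_numE // (le_lt_trans H) // ltey.
rewrite Efin lee_fin in H.
have fQ0 : 0 < fine Q by rewrite -lte_fin -Qfin.
rewrite /cond_moment /moment -/E -/Q -/M ler_pdivrMr //.
by apply: le_trans H _; rewrite -mulrA [fine Q * _]mulrC mulrA.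
Qed.
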